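(* Let $n\in\{2,6,10,\dots\}$ and let $P$ be a maximal increasing path of $f_{n+4}$ starting at the origin of $\{0,1\}^{n+4}$. Write vertices as $(\mathbf{x},y_1,y_2,y_3,y_4)$ with $\mathbf{x}\in\{0,1\}^n$, and let $\mathbf{0},\mathbf{1}\in\{0,1\}^n$ be the all-zeros and all-ones vectors. Then $P$ consists, in order, of: (i) an initial segment contained in $\{(\mathbf{x},0,0,0,0)\}$ whose projection to the first $n$ coordinates is an increasing path of $f_n$ from $\mathbf{0}$ to $\mathbf{1}$; (ii) the vertices $(\mathbf{1},1,0,0,0)$ and then $(\mathbf{1},1,1,0,0)$; (iii) $n$ steps, each changing one of the first $n$ coordinates from $1$ to $0$, ending at $(\mathbf{0},1,1,0,0)$; (iv) the vertices $(\mathbf{0},1,1,1,0)$ and then $(\mathbf{0},1,1,1,1)$; (v) a final segment contained in $\{(\mathbf{x},1,1,1,1)\}$ whose projection to the first $n$ coordinates is a maximal increasing path of $f_n$ starting at $\mathbf{0}$ (and hence, by induction, ending at $\mathbf{1}$).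
   Context: For $n\in\{2,6,10,\dots\}$ define polynomials $f_n$ in variables $x_1,\dots,x_n$ (evaluated on $\{0,1\}^n$) recursively. Set $f_2(x_1,x_2):=x_1+x_2$. For $n\in\{2,6,10,\dots\}$, write $\mathbf{x}=(x_1,\dots,x_n)$, $S:=\sum_{i=1}^n x_i$, let $M_n:=\max_{\{0,1\}^n} f_n-\min_{\{0,1\}^n} f_n+1$, and define $f_{n+4}(\mathbf{x},x_{n+1},x_{n+2},x_{n+3},x_{n+4}) := f_n(\mathbf{x}) - M_n n^2 x_{n+1} + M_n(n+1) S x_{n+1} - x_{n+2} - 2M_n n S x_{n+2} + 2M_n n(n+2) x_{n+1}x_{n+2} - 4 S x_{n+3} + 2x_{n+1}x_{n+3} + 2x_{n+2}x_{n+3} - 3x_{n+3} + (M_n(n-1)+4) S x_{n+4} + 6M_n n^2 x_{n+3}x_{n+4} - 5M_n n^2 x_{n+4}$. For a function $f:\{0,1\}^m\to\mathbb{R}$, an increasing path is a sequence of vertices $v_0,\dots,v_k$ of $\{0,1\}^m$ such that consecutive vertices differ in exactly one coordinate and $f(v_{j+1})>f(v_j)$ for all $j$. It is maximal if its last vertex is a local maximum (no neighbor has strictly larger value). *)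

(* Defs.v *)
From mathcomp Require Import all_boot all_order all_algebra.
Set Implicit Arguments. Unset Strict Implicit. Unset Printing Implicit Defensive.
Import Order.TTheory GRing.Theory Num.Theory.

(* Vertices of the cube {0,1}^m are boolean lists of length m;
   coordinate x_{i+1} (1-based in the paper) is [nth false x i]. *)

Local Open Scope ring_scope.

Definition b2i (b : bool) : int := (nat_of_bool b)%:Z.

Fixpoint allvecs (n : nat) : seq (seq bool) :=
  match n with
  | 0%N => [:: [::]]
  | n'.+1 => [seq b :: v | b <- [:: false; true], v <- allvecs n']
  end.

Definition maxl (s : seq int) : int := foldr Num.max (head 0 s) s.
Definition minl (s : seq int) : int := foldr Num.min (head 0 s) s.

Definition cubedim (k : nat) : nat := (4 * k + 2)%N.

(* fpoly k = f_{4k+2}, evaluated on a boolean list (only the first 4k+2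
   coordinates are read). *)
Fixpoint fpoly (k : nat) (x : seq bool) : int :=
  match k with
  | 0%N => b2i (nth false x 0) + b2i (nth false x 1)
  | k'.+1 =>
    let n := cubedim k' in
    let vals := [seq fpoly k' v | v <- allvecs n] in
    let M := maxl vals - minl vals + 1 in
    let S := \sum_(i < n) b2i (nth false x i) in
    let y1 := b2i (nth false x n) in
    let y2 := b2i (nth false x n.+1) in
    let y3 := b2i (nth false x n.+2) in
    let y4 := b2i (nth false x n.+3) in
    let nz : int := n%:Z in
    fpoly k' x
    - M * nz ^+ 2 * y1
    + M * (nz + 1) * S * y1
    - y2
    - 2 * M * nz * S * y2
    + 2 * M * nz * (nz + 2) * y1 * y2
    - 4 * S * y3
    + 2 * y1 * y3
    + 2 * y2 * y3
    - 3 * y3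
    + (M * (nz - 1) + 4) * S * y4
    + 6 * M * nz ^+ 2 * y3 * y4
    - 5 * M * nz ^+ 2 * y4
  end.

Definition hamming (u v : seq bool) : nat :=
  count id [seq p.1 != p.2 | p <- zip u v].

Definition adjacent (u v : seq bool) : bool :=
  (size u == size v) && (hamming u v == 1%N).

Definition is_incr_path (m : nat) (g : seq bool -> int) (p : seq (seq bool)) : Prop :=
  [/\ p != [::], all (fun v => size v == m) p
    & sorted (fun u v => adjacent u v && (g u < g v)) p].

Definition is_local_max (m : nat) (g : seq bool -> int) (v : seq bool) : Prop :=
  forall w, size w = m -> adjacent v w -> g w <= g v.

Definition is_maximal_incr_path (m : nat) (g : seq bool -> int) (p : seq (seq bool)) : Prop :=
  is_incr_path m g p /\ is_local_max m g (last [::] p).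

Definition step_down (n : nat) (a b : seq bool) : bool :=
  [exists i : 'I_n, nth false a i && (b == set_nth false a i false)].

Definition zeros (n : nat) : seq bool := nseq n false.
Definition ones (n : nat) : seq bool := nseq n true.

(* Main.v *)
Require Import Defs.
From mathcomp Require Import all_boot all_order all_algebra zify ring lra.
Set Implicit Arguments. Unset Strict Implicit. Unset Printing Implicit Defensive.
Import Order.TTheory GRing.Theory Num.Theory.
Local Open Scope ring_scope.


Lemma b2iT : b2i true = 1. Proof. by []. Qed.
Lemma b2iF : b2i false = 0. Proof. by []. Qed.

Lemma sum_count (x : seq bool) :
  \sum_(i < size x) b2i (nth false x i) = (count id x)%:Z.
Proof.
elim: x => [|a x IH]; first by rewrite big_ord0.
rewrite big_ord_recl /= IH /b2i; case: a => /=; lia.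
Qed.

Lemma hamming_cons a b u v : hamming (a :: u) (b :: v) = ((a != b) + hamming u v)%N.
Proof. by []. Qed.

Lemma hamming_cat u v w z : size u = size w ->
  hamming (u ++ v) (w ++ z) = (hamming u w + hamming v z)%N.
Proof. by move=> h; rewrite /hamming zip_cat // map_cat count_cat. Qed.

Lemma hamming0 u v : size u = size v -> hamming u v = 0%N -> u = v.
Proof.
elim: u v => [|a u IH] [|b v] //= [hs]; rewrite hamming_cons.
case: eqP => [->|] //= h; by rewrite (IH v).
Qed.

Lemma hamming_refl u : hamming u u = 0%N.
Proof. by elim: u => // a u IH; rewrite hamming_cons eqxx. Qed.

Lemma hamming1 u v : size u = size v -> hamming u v = 1%N ->
  exists2 i, (i < size u)%N & v = set_nth false u i (~~ nth false u i).
Proof.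
elim: u v => [|a u IH] [|b v] //= [hs]; rewrite hamming_cons.
case: eqP => [->|nab] /= h.
  have [i hi ->] := IH v hs h. by exists i.+1.
exists 0%N => //=. have -> := hamming0 hs; last by lia.
by case: a b nab => [] [].
Qed.

Lemma hamming_set u i : (i < size u)%N ->
  hamming u (set_nth false u i (~~ nth false u i)) = 1%N.
Proof.
elim: u i => [|a u IH] [|i] //= hi; rewrite hamming_cons.
  by case: a; rewrite /= hamming_refl.
by rewrite eqxx IH.
Qed.

Lemma count_set (x : seq bool) i c : (i < size x)%N ->
  (count id (set_nth false x i c))%:Z = (count id x)%:Z - b2i (nth false x i) + b2i c.
Proof.
elim: x i => [|a x IH] [|i] //= hi.
  rewrite /b2i; clear IH; case: a; case: c => /=; lia.
have := IH i hi; rewrite /b2i; lia.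
Qed.

Lemma count0 (x : seq bool) : count id x = 0%N -> x = nseq (size x) false.
Proof. elim: x => [|[] x IH] //= h; by rewrite -IH. Qed.

Lemma countn (x : seq bool) : count id x = size x -> x = nseq (size x) true.
Proof.
elim: x => [|[] x IH] //= h; first by rewrite -IH //; lia.
have := count_size id x; lia.
Qed.

Lemma maxl_ge (s : seq int) d a : a \in s -> a <= foldr Num.max d s.
Proof.
elim: s => [|b s IH] //=; rewrite in_cons le_max => /orP [/eqP ->|/IH ->];
  by rewrite ?lexx ?orbT.
Qed.
Lemma minl_le (s : seq int) d a : a \in s -> foldr Num.min d s <= a.
Proof.
elim: s => [|b s IH] //=; rewrite in_cons ge_min => /orP [/eqP ->|/IH ->];
  by rewrite ?lexx ?orbT.
Qed.

Lemma allvecs_in n (x : seq bool) : size x = n -> x \in allvecs n.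
Proof.
elim: n x => [|n IH] [|a x] //= [/IH h].
rewrite cats0 mem_cat; apply/orP; case: a; [right|left]; apply/mapP; by exists x.
Qed.



Definition MM k : int := let vals := [seq fpoly k v | v <- allvecs (cubedim k)] in maxl vals - minl vals + 1.
Definition SS k x : int := \sum_(i < cubedim k) b2i (nth false x i).
Definition TT (M nz S y1 y2 y3 y4 : int) : int :=
    - M * nz ^+ 2 * y1
    + M * (nz + 1) * S * y1
    - y2
    - 2 * M * nz * S * y2
    + 2 * M * nz * (nz + 2) * y1 * y2
    - 4 * S * y3
    + 2 * y1 * y3
    + 2 * y2 * y3
    - 3 * y3
    + (M * (nz - 1) + 4) * S * y4
    + 6 * M * nz ^+ 2 * y3 * y4
    - 5 * M * nz ^+ 2 * y4.
Lemma fpolyS k x : fpoly k.+1 x = fpoly k x + TT (MM k) (cubedim k)%:Z (SS k x)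
  (b2i (nth false x (cubedim k))) (b2i (nth false x (cubedim k).+1))
  (b2i (nth false x (cubedim k).+2)) (b2i (nth false x (cubedim k).+3)).
Proof. rewrite /TT /MM /SS. cbn [fpoly]. ring. Qed.

Lemma cubedimS k : cubedim k.+1 = (cubedim k + 4)%N.
Proof. rewrite /cubedim; lia. Qed.

Lemma fpoly_loc k u v : (forall i, (i < cubedim k)%N -> nth false u i = nth false v i) ->
  fpoly k u = fpoly k v.
Proof.
elim: k u v => [|k IH] u v h.
  by rewrite /= (h 0%N) // (h 1%N).
have hk : (cubedim k.+1 = cubedim k + 4)%N by apply: cubedimS.
rewrite !fpolyS (IH u v); last first.
  move=> i hi; apply: h; rewrite hk. by apply: ltn_addr.
have hS : SS k u = SS k v.
  apply: eq_bigr => i _; rewrite h // hk; apply: ltn_addr; exact: ltn_ord.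
rewrite hS (h (cubedim k)) ?(h (cubedim k).+1) ?(h (cubedim k).+2) ?(h (cubedim k).+3) //;
  by rewrite hk; lia.
Qed.

Definition T4 M nz S (y : seq bool) :=
  TT M nz S (b2i (nth false y 0)) (b2i (nth false y 1)) (b2i (nth false y 2)) (b2i (nth false y 3)).

Lemma gcat k x y : size x = cubedim k ->
  fpoly k.+1 (x ++ y) = fpoly k x + T4 (MM k) (cubedim k)%:Z (count id x)%:Z y.
Proof.
move=> hx; rewrite fpolyS /T4.
have -> : fpoly k (x ++ y) = fpoly k x.
  by apply: fpoly_loc => i hi; rewrite nth_cat hx hi.
have -> : SS k (x ++ y) = (count id x)%:Z.
  rewrite /SS -sum_count hx; apply: eq_bigr => i _; by rewrite nth_cat hx ltn_ord.
rewrite !nth_cat hx ltnn subnn.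
set n := cubedim k.
have -> : (n.+1 < n)%N = false by lia.
have -> : (n.+2 < n)%N = false by lia.
have -> : (n.+3 < n)%N = false by lia.
have -> : (n.+1 - n = 1)%N by lia.
have -> : (n.+2 - n = 2)%N by lia.
by have -> : (n.+3 - n = 3)%N by lia.
Qed.



Notation Y0 := [:: false; false; false; false].
Notation Y1 := [:: true; false; false; false].
Notation Y2 := [:: true; true; false; false].
Notation Y3 := [:: true; true; true; false].
Notation Y4 := [:: true; true; true; true].

Ltac tsimp := rewrite /T4 /TT /= ?b2iT ?b2iF ?expr2 ?(mulr0, mul0r, mulr1, mul1r, addr0, add0r, subr0, sub0r).

Lemma p3 (a b c : int) : 0 <= a -> 0 <= b -> 0 <= c -> 0 <= a * b * c.
Proof. by move=> *; rewrite !mulr_ge0. Qed.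

Lemma nb0 M nz S a b c d : 1 <= M -> 2 <= nz -> 0 <= S -> S <= nz ->
  hamming Y0 [:: a; b; c; d] = 1%N -> T4 M nz S Y0 < T4 M nz S [:: a; b; c; d] ->
  [:: a; b; c; d] = Y1 /\ S = nz.
Proof.
move=> hM hn hS0 hSn.
case: a; case: b; case: c; case: d => //= _; tsimp.
- move=> h; split => //; apply/eqP; rewrite eq_le hSn /= leNgt; apply/negP => hlt.
  have := @p3 M (nz + 1) (nz - 1 - S); nia.
- nia.
- nia.
- have := @p3 M (nz-1) (nz - S); nia.
Qed.

Lemma nb1 M nz a b c d : 1 <= M -> 2 <= nz ->
  hamming Y1 [:: a; b; c; d] = 1%N -> T4 M nz nz Y1 < T4 M nz nz [:: a; b; c; d] ->
  [:: a; b; c; d] = Y2.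
Proof.
move=> hM hn.
case: a; case: b; case: c; case: d => //= _; tsimp; nia.
Qed.

Lemma lt12 M nz : 1 <= M -> 2 <= nz -> T4 M nz nz Y1 < T4 M nz nz Y2.
Proof. move=> hM hn; tsimp; nia. Qed.

Lemma nb2 M nz S a b c d : 1 <= M -> 2 <= nz -> 0 <= S -> S <= nz ->
  hamming Y2 [:: a; b; c; d] = 1%N -> T4 M nz S Y2 < T4 M nz S [:: a; b; c; d] ->
  [:: a; b; c; d] = Y3 /\ S = 0.
Proof.
move=> hM hn hS0 hSn.
case: a; case: b; case: c; case: d => //= _; tsimp.
- move=> h; split => //; lia.
- have := @p3 M (nz-1) (nz - S); have := @p3 M nz (nz - S); nia.
- have := @p3 M (nz-1) (nz - S); have := @p3 M nz (nz - S); nia.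
- nia.
Qed.

Lemma lt23 M nz : 1 <= M -> 2 <= nz -> T4 M nz 0 Y2 < T4 M nz 0 Y3.
Proof. move=> hM hn; tsimp; nia. Qed.

Lemma nb3 M nz a b c d : 1 <= M -> 2 <= nz ->
  hamming Y3 [:: a; b; c; d] = 1%N -> T4 M nz 0 Y3 < T4 M nz 0 [:: a; b; c; d] ->
  [:: a; b; c; d] = Y4.
Proof.
move=> hM hn.
case: a; case: b; case: c; case: d => //= _; tsimp; nia.
Qed.

Lemma lt34 M nz : 1 <= M -> 2 <= nz -> T4 M nz 0 Y3 < T4 M nz 0 Y4.
Proof. move=> hM hn; tsimp; nia. Qed.

Lemma nb4 M nz S a b c d : 1 <= M -> 2 <= nz -> 0 <= S -> S <= nz ->
  hamming Y4 [:: a; b; c; d] = 1%N -> T4 M nz S Y4 < T4 M nz S [:: a; b; c; d] ->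
  False.
Proof.
move=> hM hn hS0 hSn.
case: a; case: b; case: c; case: d => //= _; tsimp.
- have := @p3 M (nz+1) (nz - S); have := @p3 M nz (nz - S); nia.
- have := @p3 M (nz+1) (nz - S); have := @p3 M nz (nz - S); nia.
- have := @p3 M (nz+1) (nz - S); have := @p3 M nz (nz - S); nia.
- have := @p3 M (nz+1) (nz - S); have := @p3 M nz (nz - S); nia.
Qed.

Lemma lin0 M nz S : T4 M nz S Y0 = 0.
Proof. tsimp; ring. Qed.
Lemma lin1 M nz S S' : T4 M nz S' Y1 = T4 M nz S Y1 + (S' - S) * (M * (nz + 1)).
Proof. tsimp; ring. Qed.
Lemma lin2 M nz S S' : T4 M nz S' Y2 = T4 M nz S Y2 - (S' - S) * (M * (nz - 1)).
Proof. tsimp; ring. Qed.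
Lemma lin3 M nz S S' : T4 M nz S' Y3 = T4 M nz S Y3 - (S' - S) * (M * (nz - 1) + 4).
Proof. tsimp; ring. Qed.
Lemma lin4 M nz S S' : T4 M nz S' Y4 = T4 M nz S Y4.
Proof. tsimp; ring. Qed.

Lemma pos01 M nz S : 1 <= M -> 2 <= nz -> T4 M nz S Y0 < T4 M nz nz Y1.
Proof. move=> hM hn; tsimp; nia. Qed.



Lemma Fbnd k x : size x = cubedim k ->
  let vals := [seq fpoly k v | v <- allvecs (cubedim k)] in
  minl vals <= fpoly k x <= maxl vals.
Proof.
move=> hx /=; set vals := map _ _; have hin : fpoly k x \in vals by apply: map_f; exact: allvecs_in.
by rewrite /minl /maxl (minl_le _ hin) (maxl_ge _ hin).
Qed.

Lemma Fdiff k x w : size x = cubedim k -> size w = cubedim k ->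
  fpoly k w - fpoly k x <= MM k - 1.
Proof.
move=> hx hw; have := Fbnd hx; have := Fbnd hw; rewrite /MM /=; lia.
Qed.

Lemma M1 k : 1 <= MM k.
Proof. have := @Fdiff k (zeros (cubedim k)) (zeros (cubedim k)); rewrite /zeros size_nseq; lia. Qed.

Lemma nz2 k : 2 <= (cubedim k)%:Z.
Proof. rewrite /cubedim; lia. Qed.

Lemma cnt_bnd (x : seq bool) : 0 <= (count id x)%:Z <= (size x)%:Z.
Proof. have := count_size id x; lia. Qed.

Lemma split_adj n x y v : size x = n -> size y = 4%N -> adjacent (x ++ y) v ->
 exists w a b c d, v = w ++ [:: a; b; c; d] /\ size w = n /\
  ((w = x /\ hamming y [:: a; b; c; d] = 1%N) \/ ([:: a; b; c; d] = y /\ hamming x w = 1%N)).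
Proof.
move=> hx hy /andP [/eqP hs /eqP hh].
rewrite size_cat hx hy in hs.
have hv := cat_take_drop n v.
have hw : size (take n v) = n by rewrite size_take -hs; case: ltnP => //; lia.
have hd : size (drop n v) = 4%N by rewrite size_drop -hs; lia.
rewrite -hv in hh *.
move: hd hh; case: (drop n v) => [|a [|b [|c [|d [|]]]]] //= _.
rewrite hamming_cat ?hw // => hh.
exists (take n v), a, b, c, d; split => //; split => //.
move: hh; case h1: (hamming x (take n v)) => [|m] hh.
  left; split; [by rewrite (hamming0 _ h1) // hw | by []].
right; split; last by lia.
by apply: esym; apply: hamming0; [rewrite hy | lia].
Qed.



Definition incr (g : seq bool -> int) u v := adjacent u v && (g u < g v).

Definition ends k := forall p, is_maximal_incr_path (cubedim k) (fpoly k) p ->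
  head [::] p = zeros (cubedim k) -> last [::] p = ones (cubedim k).

Lemma path_size g a p : path (incr g) a p -> all (fun v => size v == size a) p.
Proof.
elim: p a => [|b p IH] a //= /andP [/andP [hadj _] hp].
move: hadj => /andP [/eqP hs _].
by rewrite hs eqxx /=; apply: IH.
Qed.

Lemma adj_face x w y : size x = size w -> hamming x w = 1%N -> adjacent (x ++ y) (w ++ y).
Proof.
move=> hs hh; rewrite /adjacent !size_cat hs eqxx /= hamming_cat // hh hamming_refl. by [].
Qed.

Lemma adjE x w : size x = size w -> hamming x w = 1%N -> adjacent x w.
Proof. by move=> hs hh; rewrite /adjacent hs hh !eqxx. Qed.

Lemma lm_face k x y : size x = cubedim k -> size y = 4%N ->
  (forall S S', T4 (MM k) (cubedim k)%:Z S y = T4 (MM k) (cubedim k)%:Z S' y) ->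
  is_local_max (cubedim k + 4) (fpoly k.+1) (x ++ y) -> is_local_max (cubedim k) (fpoly k) x.
Proof.
move=> hx hy hT hlm w hw /andP [/eqP hs /eqP hh].
have := hlm (w ++ y); rewrite !gcat // (hT (count id w)%:Z (count id x)%:Z) lerD2r.
apply; last by apply: adj_face.
by rewrite size_cat hw hy.
Qed.

Lemma cnt_step (x w : seq bool) : size x = size w -> hamming x w = 1%N ->
  exists2 i, (i < size x)%N & w = set_nth false x i (~~ nth false x i) /\
  (count id w)%:Z = (count id x)%:Z + (if nth false x i then -1 else 1).
Proof.
move=> hs hh; have [i hi hw] := hamming1 hs hh; exists i => //; split => //.
rewrite hw count_set //; case: (nth false x i) => /=; rewrite ?b2iT ?b2iF; lia.
Qed.

Lemma path_cons T (r : rel T) a v s : path r a (v :: s) = r a v && path r v s.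
Proof. by []. Qed.

Lemma size_ones n : size (ones n) = n. Proof. exact: size_nseq. Qed.
Lemma size_zeros n : size (zeros n) = n. Proof. exact: size_nseq. Qed.
Lemma cnt_ones n : count id (ones n) = n. Proof. by rewrite /ones count_nseq mul1n. Qed.
Lemma cnt_zeros n : count id (zeros n) = 0%N. Proof. by rewrite /zeros count_nseq mul0n. Qed.

Lemma phase1 k p0 x rest : ends k ->
 path (incr (fpoly k)) (zeros (cubedim k)) p0 -> last (zeros (cubedim k)) p0 = x ->
 size x = cubedim k ->
 path (incr (fpoly k.+1)) (x ++ Y0) rest ->
 is_local_max (cubedim k + 4) (fpoly k.+1) (last (x ++ Y0) rest) ->
 exists Q B, [/\ rest = map (fun v => v ++ Y0) Q ++ (ones (cubedim k) ++ Y1) :: B,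
   path (incr (fpoly k)) x Q, last x Q = ones (cubedim k),
   path (incr (fpoly k.+1)) (ones (cubedim k) ++ Y1) B &
   is_local_max (cubedim k + 4) (fpoly k.+1) (last (ones (cubedim k) ++ Y1) B)].
Proof.
move=> IH; set n := cubedim k.
have hM := M1 k; have hn := nz2 k.
elim: rest p0 x => [|v rest IHr] p0 x hp0 hl hx hp hlm.
  have hlmF : is_local_max n (fpoly k) x.
    apply: (@lm_face k x Y0 hx erefl _ hlm) => S S'; by rewrite !lin0.
  have xo : x = ones n.
    rewrite -hl; apply: (IH (zeros n :: p0)) => //; split; last by rewrite /= hl.
    split; [by [] | | by []].
    rewrite /= size_zeros eqxx /=.
    by have := path_size hp0; rewrite size_zeros.
  exfalso; rewrite xo in hlm.
  have hadj1 : adjacent (ones n ++ Y0) (ones n ++ Y1).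
    by rewrite /adjacent !size_cat eqxx hamming_cat // hamming_refl.
  have hsz : size (ones n ++ Y1) = (n + 4)%N by rewrite size_cat size_ones.
  have := hlm _ hsz hadj1.
  rewrite !gcat ?size_ones // lerD2l leNgt cnt_ones.
  by rewrite pos01.
move: hp; rewrite path_cons => /andP [/andP [hadj hlt] hp].
have [w [a [b [c [d [hv [hw hc]]]]]]] := @split_adj n x Y0 v hx erefl hadj.
rewrite last_cons in hlm.
have /andP [hS0 hSn] := cnt_bnd x; rewrite hx in hSn.
case: hc => [[wx hy]|[zy hh]].
  subst w; move: hlt; rewrite hv !gcat // ltrD2l => hlt.
  have [hz hS] := nb0 hM hn hS0 hSn hy hlt.
  have xo : x = ones n.
    have hc : count id x = size x by rewrite hx; lia.
    by rewrite (countn hc) hx.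
  exists [::], rest; split => //.
  - by rewrite hz xo.
  - by rewrite -xo -hz -hv.
  - by rewrite -xo -hz -hv.
subst v; move: hlt; rewrite zy !gcat // !lin0 !addr0 => hlt.
have hxw : incr (fpoly k) x w by rewrite /incr hlt andbT adjE // hx hw.
have e1 : path (incr (fpoly k)) (zeros n) (rcons p0 w) by rewrite rcons_path hp0 hl hxw.
have e2 : last (zeros n) (rcons p0 w) = w by rewrite last_rcons.
have e3 : path (incr (fpoly k.+1)) (w ++ Y0) rest by rewrite -zy.
have e4 : is_local_max (n + 4) (fpoly k.+1) (last (w ++ Y0) rest) by rewrite -zy.
have [Q [B [h1 h2 h3 h4 h5]]] := IHr (rcons p0 w) w e1 e2 hw e3 e4.
exists (w :: Q), B; split => //.
- by rewrite h1.
- by rewrite path_cons hxw h2.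
Qed.

Lemma nth_ones n i : (i < n)%N -> nth false (ones n) i = true.
Proof. by move=> hi; rewrite /ones nth_nseq hi. Qed.
Lemma nth_zeros n i : nth false (zeros n) i = false.
Proof. by rewrite /zeros nth_nseq; case: ifP. Qed.

Lemma phase2 k B :
 path (incr (fpoly k.+1)) (ones (cubedim k) ++ Y1) B ->
 is_local_max (cubedim k + 4) (fpoly k.+1) (last (ones (cubedim k) ++ Y1) B) ->
 exists C, [/\ B = (ones (cubedim k) ++ Y2) :: C,
   path (incr (fpoly k.+1)) (ones (cubedim k) ++ Y2) C &
   is_local_max (cubedim k + 4) (fpoly k.+1) (last (ones (cubedim k) ++ Y2) C)].
Proof.
set n := cubedim k; have hM := M1 k; have hn := nz2 k.
have hx : size (ones n) = n := size_ones n.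
case: B => [|v C] hp hlm.
  exfalso.
  have hadj1 : adjacent (ones n ++ Y1) (ones n ++ Y2).
    by rewrite /adjacent !size_cat eqxx hamming_cat // hamming_refl.
  have hsz : size (ones n ++ Y2) = (n + 4)%N by rewrite size_cat size_ones.
  have := hlm _ hsz hadj1.
  by rewrite !gcat ?size_ones // lerD2l leNgt cnt_ones lt12.
move: hp; rewrite path_cons => /andP [/andP [hadj hlt] hp].
rewrite last_cons in hlm.
have [w [a [b [c [d [hv [hw hc]]]]]]] := @split_adj n (ones n) Y1 v hx erefl hadj.
case: hc => [[wx hy]|[zy hh]].
  subst w; move: hlt; rewrite hv !gcat // ltrD2l cnt_ones => hlt.
  have hz := nb1 hM hn hy hlt.
  by exists C; split => //; rewrite -hz -hv.
exfalso; subst v; move: hlt; rewrite zy !gcat //.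
have [i hi [_ hcw]] := cnt_step (etrans hx (esym hw)) hh.
rewrite hx in hi; rewrite nth_ones // in hcw.
rewrite (lin1 _ _ (count id (ones n))%:Z (count id w)%:Z) hcw cnt_ones.
have := Fdiff hx hw.
nia.
Qed.

Lemma phase3 k x C : size x = cubedim k ->
 path (incr (fpoly k.+1)) (x ++ Y2) C ->
 is_local_max (cubedim k + 4) (fpoly k.+1) (last (x ++ Y2) C) ->
 exists Q D, [/\ C = map (fun v => v ++ Y2) Q ++ (zeros (cubedim k) ++ Y3) :: D,
   path (step_down (cubedim k)) x Q, last x Q = zeros (cubedim k) /\ size Q = count id x,
   path (incr (fpoly k.+1)) (zeros (cubedim k) ++ Y3) D &
   is_local_max (cubedim k + 4) (fpoly k.+1) (last (zeros (cubedim k) ++ Y3) D)].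
Proof.
set n := cubedim k; have hM := M1 k; have hn := nz2 k.
elim: C x => [|v C IHr] x hx hp hlm.
  exfalso.
  case: (boolP (has id x)) => hh.
    set i := find id x.
    have hi : (i < size x)%N by rewrite -has_find.
    have hxi : nth false x i = true by have := nth_find false hh.
    set w := set_nth false x i (~~ nth false x i).
    have hw : size w = n by rewrite size_set_nth -hx; apply/maxn_idPr.
    have hadj1 : adjacent (x ++ Y2) (w ++ Y2).
      by apply: adj_face; [rewrite hw | apply: hamming_set].
    have hsz : size (w ++ Y2) = (n + 4)%N by rewrite size_cat hw.
    have := hlm _ hsz hadj1.
    rewrite !gcat // (lin2 _ _ (count id x)%:Z (count id w)%:Z) count_set // hxi /=.
    rewrite b2iT b2iF.
    have := Fdiff hw hx.
    nia.
  have x0 : x = zeros n.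
    have hc : count id x = 0%N by apply/eqP; rewrite -leqn0 leqNgt -has_count.
    by rewrite (count0 hc) hx.
  subst x.
  have hadj1 : adjacent (zeros n ++ Y2) (zeros n ++ Y3).
    by rewrite /adjacent !size_cat eqxx hamming_cat // hamming_refl.
  have hsz : size (zeros n ++ Y3) = (n + 4)%N by rewrite size_cat size_zeros.
  have := hlm _ hsz hadj1.
  by rewrite !gcat ?size_zeros // lerD2l leNgt cnt_zeros lt23.
move: hp; rewrite path_cons => /andP [/andP [hadj hlt] hp].
rewrite last_cons in hlm.
have [w [a [b [c [d [hv [hw hc]]]]]]] := @split_adj n x Y2 v hx erefl hadj.
have /andP [hS0 hSn] := cnt_bnd x; rewrite hx in hSn.
case: hc => [[wx hy]|[zy hh]].
  subst w; move: hlt; rewrite hv !gcat // ltrD2l => hlt.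
  have [hz hS] := nb2 hM hn hS0 hSn hy hlt.
  have x0 : x = zeros n.
    have hc : count id x = 0%N by lia.
    by rewrite (count0 hc) hx.
  exists [::], C; split => //.
  - by rewrite hz x0.
  - by split => //=; lia.
  - by rewrite -x0 -hz -hv.
  - by rewrite -x0 -hz -hv.
subst v; move: hlt; rewrite zy !gcat // => hlt.
have [i hi [hwe hcw]] := cnt_step (etrans hx (esym hw)) hh.
rewrite (lin2 _ _ (count id x)%:Z (count id w)%:Z) hcw in hlt.
have hF := Fdiff hx hw.
case hxi: (nth false x i); rewrite hxi in hwe hcw hlt.
  have hsd : step_down n x w.
    apply/existsP; rewrite hx in hi; exists (Ordinal hi) => /=.
    by rewrite hxi hwe eqxx.
  have e3 : path (incr (fpoly k.+1)) (w ++ Y2) C by rewrite -zy.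
  have e4 : is_local_max (n + 4) (fpoly k.+1) (last (w ++ Y2) C) by rewrite -zy.
  have [Q [D [h1 h2 [h3 h4] h5 h6]]] := IHr w hw e3 e4.
  exists (w :: Q), D; split => //.
  - by rewrite h1.
  - by rewrite path_cons hsd h2.
  - split => //; rewrite /= h4; lia.
exfalso; nia.
Qed.

Lemma phase4 k D :
 path (incr (fpoly k.+1)) (zeros (cubedim k) ++ Y3) D ->
 is_local_max (cubedim k + 4) (fpoly k.+1) (last (zeros (cubedim k) ++ Y3) D) ->
 exists E, [/\ D = (zeros (cubedim k) ++ Y4) :: E,
   path (incr (fpoly k.+1)) (zeros (cubedim k) ++ Y4) E &
   is_local_max (cubedim k + 4) (fpoly k.+1) (last (zeros (cubedim k) ++ Y4) E)].
Proof.
set n := cubedim k; have hM := M1 k; have hn := nz2 k.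
have hx : size (zeros n) = n := size_zeros n.
case: D => [|v E] hp hlm.
  exfalso.
  have hadj1 : adjacent (zeros n ++ Y3) (zeros n ++ Y4).
    by rewrite /adjacent !size_cat eqxx hamming_cat // hamming_refl.
  have hsz : size (zeros n ++ Y4) = (n + 4)%N by rewrite size_cat size_zeros.
  have := hlm _ hsz hadj1.
  by rewrite !gcat ?size_zeros // lerD2l leNgt cnt_zeros lt34.
move: hp; rewrite path_cons => /andP [/andP [hadj hlt] hp].
rewrite last_cons in hlm.
have [w [a [b [c [d [hv [hw hc]]]]]]] := @split_adj n (zeros n) Y3 v hx erefl hadj.
case: hc => [[wx hy]|[zy hh]].
  subst w; move: hlt; rewrite hv !gcat // ltrD2l cnt_zeros => hlt.
  have hz := nb3 hM hn hy hlt.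
  by exists E; split => //; rewrite -hz -hv.
exfalso; subst v; move: hlt; rewrite zy !gcat //.
have [i hi [_ hcw]] := cnt_step (etrans hx (esym hw)) hh.
rewrite nth_zeros in hcw.
rewrite (lin3 _ _ (count id (zeros n))%:Z (count id w)%:Z) hcw cnt_zeros.
have := Fdiff hx hw.
nia.
Qed.

Lemma phase5 k x E : size x = cubedim k ->
 path (incr (fpoly k.+1)) (x ++ Y4) E ->
 is_local_max (cubedim k + 4) (fpoly k.+1) (last (x ++ Y4) E) ->
 exists Q, [/\ E = map (fun v => v ++ Y4) Q,
   path (incr (fpoly k)) x Q & is_local_max (cubedim k) (fpoly k) (last x Q)].
Proof.
set n := cubedim k; have hM := M1 k; have hn := nz2 k.
elim: E x => [|v E IHr] x hx hp hlm.
  exists [::]; split => //.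
  apply: (@lm_face k x Y4 hx erefl _ hlm) => S S'; exact: lin4.
move: hp; rewrite path_cons => /andP [/andP [hadj hlt] hp].
rewrite last_cons in hlm.
have [w [a [b [c [d [hv [hw hc]]]]]]] := @split_adj n x Y4 v hx erefl hadj.
have /andP [hS0 hSn] := cnt_bnd x; rewrite hx in hSn.
case: hc => [[wx hy]|[zy hh]].
  exfalso; subst w; move: hlt; rewrite hv !gcat // ltrD2l => hlt.
  exact: (nb4 hM hn hS0 hSn hy hlt).
subst v; move: hlt; rewrite zy !gcat // (lin4 _ _ (count id w)%:Z (count id x)%:Z) ltrD2r => hlt.
have hxw : incr (fpoly k) x w by rewrite /incr hlt andbT adjE // hx hw.
have e3 : path (incr (fpoly k.+1)) (w ++ Y4) E by rewrite -zy.
have e4 : is_local_max (n + 4) (fpoly k.+1) (last (w ++ Y4) E) by rewrite -zy.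
have [Q [h1 h2 h3]] := IHr w hw e3 e4.
exists (w :: Q); split => //.
- by rewrite h1.
- by rewrite path_cons hxw h2.
Qed.



Lemma zeros_cat n : zeros (n + 4) = zeros n ++ Y0.
Proof. by rewrite /zeros nseqD. Qed.
Lemma ones_cat n : ones (n + 4) = ones n ++ Y4.
Proof. by rewrite /ones nseqD. Qed.

Lemma struct5 k (P : seq (seq bool)) : ends k ->
  let n := cubedim k in
  is_maximal_incr_path (n + 4) (fpoly k.+1) P ->
  head [::] P = zeros (n + 4) ->
  exists (Q1 Q3 Q5 : seq (seq bool)),
    [/\ P = [seq x ++ [:: false; false; false; false] | x <- Q1]
            ++ [:: ones n ++ [:: true; false; false; false];
                   ones n ++ [:: true; true; false; false]]
            ++ [seq x ++ [:: true; true; false; false] | x <- Q3]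
            ++ [:: zeros n ++ [:: true; true; true; false]]
            ++ [seq x ++ [:: true; true; true; true] | x <- Q5],
        is_incr_path n (fpoly k) Q1 /\ head [::] Q1 = zeros n /\ last [::] Q1 = ones n,
        size Q3 = n /\ sorted (step_down n) (ones n :: Q3) /\ last (ones n) Q3 = zeros n
      & is_maximal_incr_path n (fpoly k) Q5 /\ head [::] Q5 = zeros n].
Proof.
move=> IH n [[hne hall hsort] hlm] hhead.
case: P hne hall hsort hlm hhead => [|u rest] // _ hall hsort hlm /= hu.
subst u; rewrite zeros_cat in hsort hlm.
have hz : size (zeros n) = n := size_zeros n.
have [Q1 [B [e1 p1 l1 pB lB]]] := @phase1 k [::] (zeros n) rest IH erefl erefl hz hsort hlm.
have [C [e2 pC lC]] := phase2 pB lB.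
have [Q3 [D [e3 p3 [l3 s3] pD lD]]] := phase3 (size_ones n) pC lC.
have [E [e4 pE lE]] := phase4 pD lD.
have [Q5 [e5 p5 l5]] := phase5 hz pE lE.
exists (zeros n :: Q1), Q3, (zeros n :: Q5); split.
- by rewrite e1 e2 e3 e4 e5 /= zeros_cat.
- split; last by [].
  split => //=; rewrite hz eqxx /=.
  by have := path_size p1; rewrite hz.
- by rewrite s3 cnt_ones.
- split => //; split => //; split => //=; rewrite hz eqxx /=.
  by have := path_size p5; rewrite hz.
Qed.

Lemma ends0 : ends 0.
Proof.
move=> [|a p] [[_ hall _] hlm] _ //.
have hv : size (last a p) == cubedim 0.
  by move/allP: hall; apply; rewrite /= mem_last.
rewrite /= in hlm *; move: hlm hv.
case: (last a p) => [|x [|y [|]]] // hlm _.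
case: x y hlm => [] [] hlm //.
- by have := hlm [:: true; true] erefl erefl.
- by have := hlm [:: true; true] erefl erefl.
- by have := hlm [:: true; false] erefl erefl.
Qed.

Lemma ends_all k : ends k.
Proof.
elim: k => [|k IH]; first exact: ends0.
move=> p; rewrite cubedimS => hmax hhead.
have [Q1 [Q3 [Q5 [e1 _ _ [h5 h5']]]]] := struct5 IH hmax hhead.
have hl := IH Q5 h5 h5'.
case: Q5 h5 h5' hl e1 => [|u Q5]; first by case=> [[]].
move=> _ _ hl ->.
rewrite !last_cat /= (last_map (fun x => x ++ Y4)); rewrite /= in hl; by rewrite hl ones_cat.
Qed.


Local Close Scope ring_scope.

Theorem mainTheorem5 (k : nat) (P : seq (seq bool)) :
  let n := cubedim k in
  is_maximal_incr_path (n + 4) (fpoly k.+1) P ->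
  head [::] P = zeros (n + 4) ->
  exists (Q1 Q3 Q5 : seq (seq bool)),
    [/\ P = [seq x ++ [:: false; false; false; false] | x <- Q1]
            ++ [:: ones n ++ [:: true; false; false; false];
                   ones n ++ [:: true; true; false; false]]
            ++ [seq x ++ [:: true; true; false; false] | x <- Q3]
            ++ [:: zeros n ++ [:: true; true; true; false]]
            ++ [seq x ++ [:: true; true; true; true] | x <- Q5],
        (* (i) *)
        is_incr_path n (fpoly k) Q1 /\ head [::] Q1 = zeros n /\ last [::] Q1 = ones n,
        (* (iii) *)
        size Q3 = n /\ sorted (step_down n) (ones n :: Q3) /\ last (ones n) Q3 = zeros n
      & (* (iv)-(v) *)
        is_maximal_incr_path n (fpoly k) Q5 /\ head [::] Q5 = zeros n].
Proof. move=> n H1 H2. exact: (@struct5 k P (@ends_all k) H1 H2). Qed.
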